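(* For $a\le b$ and $\varepsilon,\delta>0$ let $T^{\varepsilon,\delta}_{a,b}:\mathbb{R}\to\mathbb{R}$ be the function equal to $0$ for $w\le a-\varepsilon$; $\frac{2}{\varepsilon^2}(w-(a-\varepsilon))^2$ on $(a-\varepsilon,a-\frac\varepsilon2]$; $1-\frac{2}{\varepsilon^2}(w-a)^2$ on $(a-\frac\varepsilon2,a]$; $1$ on $(a,b)$; $1-\frac2{\delta^2}(w-b)^2$ on $[b,b+\frac\delta2)$; $\frac{2}{\delta^2}(w-(b+\delta))^2$ on $[b+\frac\delta2,b+\delta)$; $0$ for $w\ge b+\delta$. There exists a constant $C$ such that \[\kappa_2(T^{\varepsilon,\delta}_{a,b})=\sup_{\phi,w}\big|(T^{\varepsilon,\delta}_{a,b})_\phi(w)\big|(1+|w|)^2\le C(\varepsilon^{-1}+\delta^{-1})\] for all $\varepsilon,\delta\in(0,1]$ and $0\le a\le b\le1$.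
   Context: $e(x)=e^{2\pi ix}$. For $f:\mathbb{R}\to\mathbb{R}$ and $\phi\in\mathbb{R}$: $f_\phi=f$ if $\phi\equiv0\bmod2\pi$; $f_\phi(w)=e(-1/4)f(-w)$ if $\phi\equiv\pi\bmod2\pi$; otherwise $f_\phi(w)=e(-\sigma_\phi/8)|\sin\phi|^{-1/2}\int_\mathbb{R}e\big(\frac{\frac12(w^2+w'^2)\cos\phi-ww'}{\sin\phi}\big)f(w')dw'$ with $\sigma_\phi=2\nu+1$ for $\nu\pi<\phi<(\nu+1)\pi$. *)

(* Defs.v *)
From Stdlib Require Import Reals.
From Coquelicot Require Import Coquelicot.
Open Scope R_scope.

(* e(x) = exp(2 pi i x) *)
Definition ee (x : R) : C := (cos (2 * PI * x), sin (2 * PI * x)).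

Definition CInt_R (g : R -> C) : C :=
  (RInt_gen (fun t => fst (g t)) (Rbar_locally m_infty) (Rbar_locally p_infty),
   RInt_gen (fun t => snd (g t)) (Rbar_locally m_infty) (Rbar_locally p_infty)).

(* sigma_phi = 2 nu + 1 where nu pi < phi < (nu+1) pi, i.e. nu = floor(phi/pi) *)
Definition sigma_phi (phi : R) : R := 2 * IZR (Int_part (phi / PI)) + 1.

Definition frft (f : R -> R) (phi : R) (w : R) : C :=
  let k := Int_part (phi / PI) in
  if Req_EM_T (phi / PI) (IZR k) then
    (if Z.even k then RtoC (f w)               (* phi = 0 mod 2 pi *)
     else Cmult (ee (-(1/4))) (RtoC (f (- w)))) (* phi = pi mod 2 pi *)
  else
    Cmult (Cmult (ee (- sigma_phi phi / 8)) (RtoC (/ sqrt (Rabs (sin phi)))))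
      (CInt_R (fun w' =>
         Cmult (ee (((1/2) * (w ^ 2 + w' ^ 2) * cos phi - w * w') / sin phi))
               (RtoC (f w')))).

Definition Tfun (eps delta a b : R) (w : R) : R :=
  if Rle_dec w (a - eps) then 0
  else if Rle_dec w (a - eps / 2) then 2 / eps ^ 2 * (w - (a - eps)) ^ 2
  else if Rle_dec w a then 1 - 2 / eps ^ 2 * (w - a) ^ 2
  else if Rlt_dec w b then 1
  else if Rlt_dec w (b + delta / 2) then 1 - 2 / delta ^ 2 * (w - b) ^ 2
  else if Rlt_dec w (b + delta) then 2 / delta ^ 2 * (w - (b + delta)) ^ 2
  else 0.

(* Main.v *)
Require Import Defs.
From Stdlib Require Import Reals Lra Psatz FunctionalExtensionality ZArith.
From Coquelicot Require Import Coquelicot.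
Open Scope R_scope.

Definition qpoly (al be z u : R) := al + be * (u - z) ^ 2.
Section T.
Variables eps delta a b : R.
Hypothesis He : 0 < eps <= 1.
Hypothesis Hd : 0 < delta <= 1.
Hypothesis Ha : 0 <= a.
Hypothesis Hab : a <= b.
Hypothesis Hb : b <= 1.

Local Notation T := (Tfun eps delta a b).

Lemma T1 u : a - eps <= u <= a - eps / 2 -> T u = qpoly 0 (2 / eps ^ 2) (a - eps) u.
Proof.
  intros H; unfold T, Tfun, qpoly.
  destruct (Rle_dec u (a - eps)).
  - replace u with (a - eps) by lra. ring.
  - destruct (Rle_dec u (a - eps / 2)); [ring | lra].
Qed.

Lemma T2 u : a - eps / 2 <= u <= a -> T u = qpoly 1 (- (2 / eps ^ 2)) a u.
Proof.
  intros H; unfold T, Tfun, qpoly.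
  destruct (Rle_dec u (a - eps)); [lra|].
  destruct (Rle_dec u (a - eps / 2)).
  - replace u with (a - eps / 2) by lra. field. lra.
  - destruct (Rle_dec u a); [ring | lra].
Qed.

Lemma T3 u : a <= u <= b -> T u = qpoly 1 0 0 u.
Proof.
  intros H; unfold T, Tfun, qpoly.
  destruct (Rle_dec u (a - eps)); [lra|].
  destruct (Rle_dec u (a - eps / 2)); [lra|].
  destruct (Rle_dec u a).
  - replace u with a by lra. ring.
  - destruct (Rlt_dec u b); [ring|].
    destruct (Rlt_dec u (b + delta / 2)); [|lra].
    replace u with b by lra. ring.
Qed.

Lemma T4 u : b <= u <= b + delta / 2 -> T u = qpoly 1 (- (2 / delta ^ 2)) b u.
Proof.
  intros H; unfold T, Tfun, qpoly.
  destruct (Rle_dec u (a - eps)); [lra|].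
  destruct (Rle_dec u (a - eps / 2)); [lra|].
  destruct (Rle_dec u a).
  - replace u with a by lra. replace b with a by lra. ring.
  - destruct (Rlt_dec u b); [lra|].
    destruct (Rlt_dec u (b + delta / 2)); [ring|].
    replace u with (b + delta / 2) by lra.
    destruct (Rlt_dec (b + delta / 2) (b + delta)); [|lra].
    field. lra.
Qed.

Lemma T5 u : b + delta / 2 <= u <= b + delta -> T u = qpoly 0 (2 / delta ^ 2) (b + delta) u.
Proof.
  intros H; unfold T, Tfun, qpoly.
  destruct (Rle_dec u (a - eps)); [lra|].
  destruct (Rle_dec u (a - eps / 2)); [lra|].
  destruct (Rle_dec u a); [lra|].
  destruct (Rlt_dec u b); [lra|].
  destruct (Rlt_dec u (b + delta / 2)); [lra|].
  destruct (Rlt_dec u (b + delta)); [ring|].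
  replace u with (b + delta) by lra. ring.
Qed.

Lemma T0l u : u <= a - eps -> T u = 0.
Proof. intros H; unfold T, Tfun. destruct (Rle_dec u (a - eps)); [ring|lra]. Qed.

Lemma T0r u : b + delta <= u -> T u = 0.
Proof.
  intros H; unfold T, Tfun.
  destruct (Rle_dec u (a - eps)); [ring|].
  destruct (Rle_dec u (a - eps / 2)); [lra|].
  destruct (Rle_dec u a); [lra|].
  destruct (Rlt_dec u b); [lra|].
  destruct (Rlt_dec u (b + delta / 2)); [lra|].
  destruct (Rlt_dec u (b + delta)); [lra|ring].
Qed.

End T.


Lemma poly_cont al be z u : continuous (qpoly al be z) u.
Proof. apply (ex_derive_continuous (K:=R_AbsRing) (V:=R_NormedModule) (qpoly al be z)). unfold qpoly. auto_derive. auto. Qed.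

Lemma mult_cont (f g : R -> R) u : continuous f u -> continuous g u ->
  continuous (fun x => f x * g x) u.
Proof. intros; apply (continuous_mult f g); auto. Qed.

Definition piece_ok p q al be z D :=
  0 <= q - p <= 1 /\ 0 <= D /\ (q - p) * Rabs (2 * be) <= D /\
  forall u, p <= u <= q -> Rabs (qpoly al be z u) <= 1 /\ Rabs (2 * be * (u - z)) <= D.

Lemma helper k t : 0 < k -> Rabs t <= k / 2 ->
  0 <= 2 / k ^ 2 * t ^ 2 <= 1 / 2 /\ Rabs (2 * (2 / k ^ 2) * t) <= 2 / k.
Proof.
  intros Hk Ht.
  set (ie := / k).
  assert (E : k * ie = 1) by (unfold ie; field; lra).
  assert (Hie : 0 < ie) by (unfold ie; apply Rinv_0_lt_compat; lra).
  replace (2 / k ^ 2) with (2 * ie ^ 2) by (unfold ie; field; lra).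
  replace (2 / k) with (2 * ie) by (unfold ie; field; lra).
  assert (Hti : Rabs (t * ie) <= 1/2).
  { rewrite Rabs_mult, (Rabs_right ie) by lra.
    apply Rle_trans with (k / 2 * ie). apply Rmult_le_compat_r; lra.
    replace (k/2*ie) with ((k*ie)/2) by field. lra. }
  split.
  - assert (0 <= (t*ie)^2 <= 1/4).
    { split. nra. apply Rabs_le_between in Hti. nra. }
    split; nra.
  - replace (2 * (2 * ie ^ 2) * t) with (4 * ie * (t * ie)) by ring.
    rewrite !Rabs_mult, (Rabs_right 4), (Rabs_right ie) by lra.
    nra.
Qed.

Section P.
Variables eps delta a b : R.
Hypothesis He : 0 < eps <= 1.
Hypothesis Hd : 0 < delta <= 1.
Hypothesis Ha : 0 <= a.
Hypothesis Hab : a <= b.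
Hypothesis Hb : b <= 1.

Lemma pok1 : piece_ok (a - eps) (a - eps / 2) 0 (2 / eps ^ 2) (a - eps) (2 / eps).
Proof.
  split; [lra|]. split; [apply Rlt_le, Rdiv_lt_0_compat; lra|]. split.
  - rewrite Rabs_right. apply Req_le. field. lra.
    apply Rle_ge, Rmult_le_pos. lra. apply Rlt_le, Rdiv_lt_0_compat. lra. apply pow_lt; lra.
  - intros u Hu. destruct (helper eps (u - (a - eps))) as [H1 H2]; [lra| |].
    rewrite Rabs_right; lra.
    unfold qpoly. split; [rewrite Rabs_right; lra | exact H2].
Qed.

Lemma pok2 : piece_ok (a - eps / 2) a 1 (- (2 / eps ^ 2)) a (2 / eps).
Proof.
  split; [lra|]. split; [apply Rlt_le, Rdiv_lt_0_compat; lra|]. split.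
  - rewrite Rabs_left1. apply Req_le. field. lra.
    assert (0 < 2 / eps ^ 2) by (apply Rdiv_lt_0_compat; [lra| apply pow_lt; lra]). lra.
  - intros u Hu. destruct (helper eps (u - a)) as [H1 H2]; [lra| |].
    rewrite Rabs_left1; lra.
    unfold qpoly. split; [rewrite Rabs_right; lra|].
    replace (2 * - (2 / eps ^ 2) * (u - a)) with (- (2 * (2 / eps ^ 2) * (u - a))) by ring.
    rewrite Rabs_Ropp. exact H2.
Qed.

Lemma pok3 : piece_ok a b 1 0 0 0.
Proof.
  split; [lra|]. split; [lra|]. split.
  - replace (2*0) with 0 by ring. rewrite Rabs_R0. lra.
  - intros u Hu. unfold qpoly. replace (1 + 0 * (u - 0) ^ 2) with 1 by ring.
    replace (2 * 0 * (u - 0)) with 0 by ring. rewrite Rabs_R0, Rabs_R1; lra.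
Qed.

Lemma pok4 : piece_ok b (b + delta / 2) 1 (- (2 / delta ^ 2)) b (2 / delta).
Proof.
  split; [lra|]. split; [apply Rlt_le, Rdiv_lt_0_compat; lra|]. split.
  - rewrite Rabs_left1. apply Req_le. field. lra.
    assert (0 < 2 / delta ^ 2) by (apply Rdiv_lt_0_compat; [lra| apply pow_lt; lra]). lra.
  - intros u Hu. destruct (helper delta (u - b)) as [H1 H2]; [lra| |].
    rewrite Rabs_right; lra.
    unfold qpoly. split; [rewrite Rabs_right; lra|].
    replace (2 * - (2 / delta ^ 2) * (u - b)) with (- (2 * (2 / delta ^ 2) * (u - b))) by ring.
    rewrite Rabs_Ropp. exact H2.
Qed.

Lemma pok5 : piece_ok (b + delta / 2) (b + delta) 0 (2 / delta ^ 2) (b + delta) (2 / delta).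
Proof.
  split; [lra|]. split; [apply Rlt_le, Rdiv_lt_0_compat; lra|]. split.
  - rewrite Rabs_right. apply Req_le. field. lra.
    apply Rle_ge, Rmult_le_pos. lra. apply Rlt_le, Rdiv_lt_0_compat. lra. apply pow_lt; lra.
  - intros u Hu. destruct (helper delta (u - (b + delta))) as [H1 H2]; [lra| |].
    rewrite Rabs_left1; lra.
    unfold qpoly. split; [rewrite Rabs_right; lra | exact H2].
Qed.
End P.

Definition Ipiece (f : R -> R) p q al be z := RInt (fun u => f u * qpoly al be z u) p q.

Lemma piece_is (f g : R -> R) p q al be z : p <= q -> (forall u, continuous f u) ->
  (forall u, p <= u <= q -> g u = f u * qpoly al be z u) ->
  is_RInt g p q (Ipiece f p q al be z).
Proof.
  intros Hpq Hf Hg.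
  apply is_RInt_ext with (fun u => f u * qpoly al be z u).
  { intros x Hx. rewrite Rmin_left, Rmax_right in Hx by lra. rewrite Hg; [reflexivity|lra]. }
  unfold Ipiece. apply (RInt_correct (V:=R_CompleteNormedModule)). apply (ex_RInt_continuous (V:=R_CompleteNormedModule)). intros; apply mult_cont; auto. apply poly_cont.
Qed.

Lemma zero_is (g : R -> R) p q : p <= q -> (forall u, p < u < q -> g u = 0) -> is_RInt g p q 0.
Proof.
  intros Hpq Hg.
  apply is_RInt_ext with (fun _ => 0).
  { intros x Hx. rewrite Rmin_left, Rmax_right in Hx by lra. rewrite Hg; [reflexivity|lra]. }
  assert (H := is_RInt_const (V:=R_NormedModule) p q zero).
  match type of H with is_RInt _ _ _ ?v => cut (v = 0); [intros E; rewrite E in H; exact H|] end.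
  unfold scal, zero; simpl. unfold mult; simpl. ring.
Qed.

Definition SumI f eps delta a b :=
  Ipiece f (a - eps) (a - eps / 2) 0 (2 / eps ^ 2) (a - eps) +
  Ipiece f (a - eps / 2) a 1 (- (2 / eps ^ 2)) a +
  Ipiece f a b 1 0 0 +
  Ipiece f b (b + delta / 2) 1 (- (2 / delta ^ 2)) b +
  Ipiece f (b + delta / 2) (b + delta) 0 (2 / delta ^ 2) (b + delta).

Lemma plusR (x y : R) : plus x y = x + y.
Proof. reflexivity. Qed.

Lemma decomp f eps delta a b : 0 < eps <= 1 -> 0 < delta <= 1 -> 0 <= a -> a <= b -> b <= 1 ->
  (forall u, continuous f u) ->
  is_RInt_gen (fun u => f u * Tfun eps delta a b u) (Rbar_locally m_infty) (Rbar_locally p_infty)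
    (SumI f eps delta a b).
Proof.
  intros He Hd Ha Hab Hb Hf P HP.
  apply Filter_prod with (fun L => L < -2) (fun R => 3 < R).
  - exists (-2). auto.
  - exists 3. auto.
  - intros L R HL HR. exists (SumI f eps delta a b). split; [|apply locally_singleton; exact HP].
    simpl.
    assert (I0 : is_RInt (fun u => f u * Tfun eps delta a b u) L (a - eps) 0).
    { apply zero_is; [lra|]. intros u Hu. cbv beta. rewrite T0l; auto; lra. }
    assert (I1 := piece_is f (fun u => f u * Tfun eps delta a b u) (a - eps) (a - eps / 2) 0 (2 / eps ^ 2) (a - eps) ltac:(lra) Hf
        ltac:(intros u Hu; cbv beta; rewrite T1; auto)).
    assert (I2 := piece_is f (fun u => f u * Tfun eps delta a b u) (a - eps / 2) a 1 (- (2 / eps ^ 2)) a ltac:(lra) Hf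
        ltac:(intros u Hu; cbv beta; rewrite T2; auto)).
    assert (I3 := piece_is f (fun u => f u * Tfun eps delta a b u) a b 1 0 0 ltac:(lra) Hf
        ltac:(intros u Hu; cbv beta; rewrite T3; auto)).
    assert (I4 := piece_is f (fun u => f u * Tfun eps delta a b u) b (b + delta / 2) 1 (- (2 / delta ^ 2)) b ltac:(lra) Hf
        ltac:(intros u Hu; cbv beta; rewrite T4; auto)).
    assert (I5 := piece_is f (fun u => f u * Tfun eps delta a b u) (b + delta / 2) (b + delta) 0 (2 / delta ^ 2) (b + delta) ltac:(lra) Hf
        ltac:(intros u Hu; cbv beta; rewrite T5; auto)).
    assert (I6 : is_RInt (fun u => f u * Tfun eps delta a b u) (b + delta) R 0).
    { apply zero_is; [lra|]. intros u Hu. cbv beta. rewrite T0r; auto; lra. }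
    assert (J := is_RInt_Chasles _ _ _ _ _ _ I0 I1).
    assert (J2 := is_RInt_Chasles _ _ _ _ _ _ J I2).
    assert (J3 := is_RInt_Chasles _ _ _ _ _ _ J2 I3).
    assert (J4 := is_RInt_Chasles _ _ _ _ _ _ J3 I4).
    assert (J5 := is_RInt_Chasles _ _ _ _ _ _ J4 I5).
    assert (J6 := is_RInt_Chasles _ _ _ _ _ _ J5 I6).
    
    match type of J6 with is_RInt _ _ _ ?v => cut (v = SumI f eps delta a b); [intros E; unfold SumI in E; rewrite E in J6; exact J6|] end.
    unfold SumI, plus; simpl. ring.
Qed.

Lemma hb1 a1 b1 c1 D mu K : 0 <= a1 <= D -> 0 <= b1 <= mu -> 0 <= c1 <= 1 -> 0 <= K -> K * mu <= 1/4 ->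
  a1 * b1 ^ 2 + 2 * K * c1 * b1 ^ 3 <= D * mu ^ 2 + mu ^ 2 / 2.
Proof.
  intros. assert (b1^2 <= mu^2) by nra. assert (b1^3 <= mu^3) by nra.
  assert (a1 * b1^2 <= D * mu^2) by nra.
  assert (0 <= b1^3) by (apply pow_le; lra).
  assert (c1 * b1^3 <= mu^3) by nra.
  assert (K * c1 * b1^3 <= K * mu^3) by (rewrite Rmult_assoc; apply Rmult_le_compat_l; lra).
  assert (K * mu^3 <= mu^2 / 4).
  { replace (K * mu^3) with ((K*mu)*mu^2) by ring. assert (0 <= mu^2) by nra. nra. }
  nra.
Qed.

Lemma hb2 g a1 b1 c1 D mu K l : 0 <= l <= 1 -> 0 <= g -> l * g <= D -> 0 <= a1 <= D -> 0 <= b1 <= mu -> 0 <= c1 <= 1 -> 0 <= K -> K * mu <= 1/4 ->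
  l * (g * b1 ^ 2 + 6 * K * a1 * b1 ^ 3 + 12 * K ^ 2 * c1 * b1 ^ 4) <= 5/2 * D * mu ^ 2 + 3/4 * mu ^ 2.
Proof.
  intros. assert (b1^2 <= mu^2) by nra. assert (b1^3 <= mu^3) by nra. assert (b1^4 <= mu^4) by nra.
  assert (l * g * b1^2 <= D * mu^2) by nra.
  assert (0 <= b1^3) by (apply pow_le; lra).
  assert (a1 * b1^3 <= D * mu^3) by (apply Rmult_le_compat; lra).
  assert (K * a1 * b1^3 <= K * D * mu^3) by (rewrite !Rmult_assoc; apply Rmult_le_compat_l; lra).
  assert (K * D * mu^3 <= D * mu^2 / 4).
  { replace (K * D * mu^3) with ((K*mu)*(D*mu^2)) by ring. assert (0 <= D*mu^2) by nra. nra. }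
  assert (0 <= b1^4) by (apply pow_le; lra).
  assert (c1 * b1^4 <= mu^4) by nra.
  assert (0 <= K^2) by nra.
  assert (K^2 * c1 * b1^4 <= K^2 * mu^4) by (rewrite Rmult_assoc; apply Rmult_le_compat_l; lra).
  assert (K^2 * mu^4 <= mu^2 / 16).
  { replace (K^2 * mu^4) with ((K*mu)^2*mu^2) by ring. assert (0 <= mu^2) by nra.
    assert (0 <= K*mu) by (apply Rmult_le_pos; lra).
    assert ((K*mu)^2 <= 1/16) by nra. nra. }
  assert (0 <= 6 * K * a1 * b1 ^ 3 + 12 * K ^ 2 * c1 * b1 ^ 4).
  { apply Rplus_le_le_0_compat; repeat apply Rmult_le_pos; try lra; apply pow_le; lra. }
  set (Y := 6 * K * a1 * b1 ^ 3 + 12 * K ^ 2 * c1 * b1 ^ 4) in *.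
  assert (l * Y <= Y) by nra.
  assert (Y <= 6 * (D * mu^2/4) + 12 * (mu^2/16)) by (unfold Y; lra).
  replace (l * (g * b1 ^ 2 + 6 * K * a1 * b1 ^ 3 + 12 * K ^ 2 * c1 * b1 ^ 4)) with (l * g * b1 ^ 2 + l * Y) by (unfold Y; ring).
  clearbody Y. lra.
Qed.

Ltac nz := repeat match goal with |- _ /\ _ => split | |- _ * _ <> 0 => apply Rmult_integral_contrapositive_currified | |- True => exact I end; auto; try lra.

Lemma COS_bound_abs x : Rabs (cos x) <= 1.
Proof. apply Rabs_le. apply COS_bound. Qed.
Lemma SIN_bound_abs x : Rabs (sin x) <= 1.
Proof. apply Rabs_le. apply SIN_bound. Qed.

Definition th k2 k1 k0 u := k2 * u ^ 2 + k1 * u + k0.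
Definition dd k2 k1 u := 2 * k2 * u + k1.
Definition SS k2 k1 k0 u := sin (th k2 k1 k0 u) / dd k2 k1 u.
Definition HH k2 k1 al be z u :=
  2 * be * (u - z) / (dd k2 k1 u) ^ 2 - qpoly al be z u * (2 * k2) / (dd k2 k1 u) ^ 3.
Definition HP k2 k1 al be z u :=
  2 * be / (dd k2 k1 u) ^ 2 - 6 * k2 * (2 * be * (u - z)) / (dd k2 k1 u) ^ 3
  + 12 * k2 ^ 2 * qpoly al be z u / (dd k2 k1 u) ^ 4.
Definition GG k2 k1 k0 al be z u :=
  SS k2 k1 k0 u * qpoly al be z u + cos (th k2 k1 k0 u) * HH k2 k1 al be z u.

Lemma GG_der k2 k1 k0 al be z x : dd k2 k1 x <> 0 ->
  is_derive (GG k2 k1 k0 al be z) x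
    (cos (th k2 k1 k0 x) * qpoly al be z x + cos (th k2 k1 k0 x) * HP k2 k1 al be z x).
Proof.
  intros H. unfold GG, SS, HH, HP, th, dd, qpoly in *.
  auto_derive.
  - nz.
  - replace (k2 * (x * (x * 1)) + k1 * x + k0) with (k2 * x ^ 2 + k1 * x + k0) by ring. field. auto.
Qed.

Lemma GGd_cont k2 k1 k0 al be z x : dd k2 k1 x <> 0 ->
  continuous (fun u => cos (th k2 k1 k0 u) * qpoly al be z u + cos (th k2 k1 k0 u) * HP k2 k1 al be z u) x.
Proof.
  intros H.
  apply (ex_derive_continuous (K:=R_AbsRing) (V:=R_NormedModule)).
  unfold HP, th, dd, qpoly in *. auto_derive. nz.
Qed.

Lemma HH_bound k2 k1 al be z u D m : 0 < m -> 4 * Rabs k2 <= m -> m <= Rabs (dd k2 k1 u) ->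
  Rabs (qpoly al be z u) <= 1 -> Rabs (2 * be * (u - z)) <= D ->
  Rabs (HH k2 k1 al be z u) <= D * (/ m) ^ 2 + (/ m) ^ 2 / 2.
Proof.
  intros Hm Hk Hd HP1 HP2.
  assert (Hd0 : dd k2 k1 u <> 0) by (intro E; rewrite E, Rabs_R0 in Hd; lra).
  set (i := / dd k2 k1 u).
  assert (Hi : Rabs i <= / m).
  { unfold i. rewrite Rabs_inv. apply Rinv_le_contravar; lra. }
  assert (HKm : Rabs k2 * / m <= 1/4).
  { apply Rmult_le_reg_r with m; [lra|]. rewrite Rmult_assoc, Rinv_l by lra. lra. }
  replace (HH k2 k1 al be z u) with (2 * be * (u - z) * i ^ 2 - 2 * k2 * qpoly al be z u * i ^ 3)
    by (unfold HH, i; field; auto).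
  set (P1 := 2 * be * (u - z)) in *. set (P0 := qpoly al be z u) in *.
  eapply Rle_trans; [apply Rabs_triang|]. rewrite Rabs_Ropp.
  rewrite !Rabs_mult, <- !RPow_abs. rewrite (Rabs_right 2) by lra.
  apply hb1; auto; try split; try apply Rabs_pos; auto.
Qed.

Lemma HP_bound k2 k1 al be z u D m : 0 < m -> m <= Rabs (dd k2 k1 u) ->
  Rabs (qpoly al be z u) <= 1 -> Rabs (2 * be * (u - z)) <= D ->
  Rabs (HP k2 k1 al be z u) <= Rabs (2 * be) * (/ m) ^ 2 + 6 * Rabs k2 * D * (/ m) ^ 3 + 12 * Rabs k2 ^ 2 * (/ m) ^ 4.
Proof.
  intros Hm Hd HP1 HP2.
  assert (Hd0 : dd k2 k1 u <> 0) by (intro E; rewrite E, Rabs_R0 in Hd; lra).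
  set (i := / dd k2 k1 u).
  assert (Hi : Rabs i <= / m).
  { unfold i. rewrite Rabs_inv. apply Rinv_le_contravar; lra. }
  replace (HP k2 k1 al be z u) with (2 * be * i ^ 2 - 6 * k2 * (2 * be * (u - z)) * i ^ 3 + 12 * k2 ^ 2 * qpoly al be z u * i ^ 4)
    by (unfold HP, i; field; auto).
  set (P1 := 2 * be * (u - z)) in *. set (P0 := qpoly al be z u) in *.
  set (g := 2 * be).
  assert (0 <= Rabs i) by apply Rabs_pos.
  set (mu := / m) in *.
  assert (Hi2 : Rabs i ^ 2 <= mu ^ 2) by (apply pow_incr; lra).
  assert (Hi3 : Rabs i ^ 3 <= mu ^ 3) by (apply pow_incr; lra).
  assert (Hi4 : Rabs i ^ 4 <= mu ^ 4) by (apply pow_incr; lra).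
  eapply Rle_trans; [apply Rabs_triang|].
  apply Rplus_le_compat.
  - eapply Rle_trans; [apply Rabs_triang|]. rewrite Rabs_Ropp.
    apply Rplus_le_compat.
    + rewrite Rabs_mult, <- RPow_abs. apply Rmult_le_compat_l; [apply Rabs_pos| auto].
    + rewrite !Rabs_mult, <- RPow_abs. rewrite (Rabs_right 6) by lra.
      assert (0 <= Rabs k2) by apply Rabs_pos. assert (0 <= Rabs P1) by apply Rabs_pos.
      assert (0 <= Rabs i ^ 3) by (apply pow_le; lra).
      replace (6 * Rabs k2 * Rabs P1 * Rabs i ^ 3) with ((6 * Rabs k2) * (Rabs P1 * Rabs i ^ 3)) by ring.
      replace (6 * Rabs k2 * D * mu ^ 3) with ((6 * Rabs k2) * (D * mu ^ 3)) by ring.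
      apply Rmult_le_compat_l; [lra|]. apply Rmult_le_compat; lra.
  - rewrite !Rabs_mult, <- !RPow_abs. rewrite (Rabs_right 12) by lra.
    assert (0 <= Rabs k2 ^ 2) by (apply pow_le, Rabs_pos). assert (0 <= Rabs P0) by apply Rabs_pos.
    assert (0 <= Rabs i ^ 4) by (apply pow_le; lra).
    replace (12 * Rabs k2 ^ 2 * Rabs P0 * Rabs i ^ 4) with ((12 * Rabs k2 ^ 2) * (Rabs P0 * Rabs i ^ 4)) by ring.
    replace (12 * Rabs k2 ^ 2 * mu ^ 4) with ((12 * Rabs k2 ^ 2) * (1 * mu ^ 4)) by ring.
    apply Rmult_le_compat_l; [lra|]. apply Rmult_le_compat; lra.
Qed.

Lemma bigw_piece k2 k1 k0 p q al be z D m :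
  piece_ok p q al be z D -> 0 < m -> 4 * Rabs k2 <= m ->
  (forall u, p <= u <= q -> m <= Rabs (dd k2 k1 u)) ->
  exists E, Ipiece (fun u => cos (th k2 k1 k0 u)) p q al be z =
     SS k2 k1 k0 q * qpoly al be z q - SS k2 k1 k0 p * qpoly al be z p + E /\
     Rabs E <= (5 * D + 2) * (/ m) ^ 2.
Proof.
  intros [Hl [HD [Hg Hu]]] Hm Hk Hdd.
  assert (Hnz : forall x, p <= x <= q -> dd k2 k1 x <> 0).
  { intros x Hx E. specialize (Hdd x Hx). rewrite E, Rabs_R0 in Hdd. lra. }
  assert (I1 := is_RInt_derive (V:=R_CompleteNormedModule) (GG k2 k1 k0 al be z) _ p q
     ltac:(intros x Hx; rewrite Rmin_left, Rmax_right in Hx by lra; apply GG_der; apply Hnz; auto)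
     ltac:(intros x Hx; rewrite Rmin_left, Rmax_right in Hx by lra; apply GGd_cont; apply Hnz; auto)).
  set (F2 := fun u => cos (th k2 k1 k0 u) * HP k2 k1 al be z u).
  assert (Ex2 : ex_RInt (V:=R_CompleteNormedModule) F2 p q).
  { apply (ex_RInt_continuous (V:=R_CompleteNormedModule)). intros x Hx.
    rewrite Rmin_left, Rmax_right in Hx by lra. unfold F2.
    apply (ex_derive_continuous (K:=R_AbsRing) (V:=R_NormedModule)).
    assert (H := Hnz x Hx). unfold HP, th, dd, qpoly in *. auto_derive. nz. }
  set (R2 := RInt F2 p q).
  assert (I2 : is_RInt F2 p q R2) by (apply (RInt_correct (V:=R_CompleteNormedModule)); auto).
  assert (I3 := is_RInt_minus _ _ _ _ _ _ I1 I2).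
  assert (I4 : is_RInt (fun u => cos (th k2 k1 k0 u) * qpoly al be z u) p q
                (GG k2 k1 k0 al be z q - GG k2 k1 k0 al be z p - R2)).
  { eapply is_RInt_ext; [|exact I3]. intros x _. unfold minus, plus, opp, F2; simpl. lra. }
  exists (cos (th k2 k1 k0 q) * HH k2 k1 al be z q - cos (th k2 k1 k0 p) * HH k2 k1 al be z p - R2).
  split.
  - unfold Ipiece. rewrite (is_RInt_unique _ _ _ _ I4). unfold GG. match goal with |- ?a = ?b => change (@eq R a b) end; ring.
  - set (mu := / m).
    assert (Hmu : 0 < mu) by (apply Rinv_0_lt_compat; lra).
    assert (Hq := Hu q ltac:(lra)). assert (Hp := Hu p ltac:(lra)).
    assert (B1 := HH_bound k2 k1 al be z q D m Hm Hk (Hdd q ltac:(lra)) (proj1 Hq) (proj2 Hq)).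
    assert (B2 := HH_bound k2 k1 al be z p D m Hm Hk (Hdd p ltac:(lra)) (proj1 Hp) (proj2 Hp)).
    assert (B3 : Rabs R2 <= (q - p) * (Rabs (2 * be) * mu ^ 2 + 6 * Rabs k2 * D * mu ^ 3 + 12 * Rabs k2 ^ 2 * mu ^ 4)).
    { apply abs_RInt_le_const; [lra|exact Ex2|]. intros t Ht. unfold F2.
      rewrite Rabs_mult. 
      apply Rle_trans with (1 * Rabs (HP k2 k1 al be z t)).
      apply Rmult_le_compat_r; [apply Rabs_pos| apply COS_bound_abs]. rewrite Rmult_1_l.
      apply HP_bound; auto; apply Hu; auto. }
    assert (HKm : Rabs k2 * mu <= 1/4).
    { apply Rmult_le_reg_r with m; [lra|]. unfold mu. rewrite Rmult_assoc, Rinv_l by lra. lra. }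
    assert (B4 := hb2 (Rabs (2 * be)) D mu 1 D mu (Rabs k2) (q - p) Hl ltac:(apply Rabs_pos) Hg
                  ltac:(lra) ltac:(lra) ltac:(lra) ltac:(apply Rabs_pos) HKm).
    assert (C1 : Rabs (cos (th k2 k1 k0 q) * HH k2 k1 al be z q) <= D * mu ^ 2 + mu ^ 2 / 2).
    { rewrite Rabs_mult. eapply Rle_trans; [|exact B1].
      rewrite <- (Rmult_1_l (Rabs (HH _ _ _ _ _ q))) at 2.
      apply Rmult_le_compat_r; [apply Rabs_pos| apply COS_bound_abs]. }
    assert (C2 : Rabs (cos (th k2 k1 k0 p) * HH k2 k1 al be z p) <= D * mu ^ 2 + mu ^ 2 / 2).
    { rewrite Rabs_mult. eapply Rle_trans; [|exact B2].
      rewrite <- (Rmult_1_l (Rabs (HH _ _ _ _ _ p))) at 2.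
      apply Rmult_le_compat_r; [apply Rabs_pos| apply COS_bound_abs]. }
    replace (q - p) with (q - p) in B3 by ring.
    unfold Rminus at 1.
    eapply Rle_trans; [apply Rabs_triang|]. rewrite Rabs_Ropp.
    eapply Rle_trans; [apply Rplus_le_compat_r, Rabs_triang|]. rewrite Rabs_Ropp.
    replace (1 * mu ^ 4) with (mu ^ 4) in B4 by ring.
    replace ((q - p) * (Rabs (2 * be) * mu ^ 2 + 6 * Rabs k2 * D * mu ^ 3 + 12 * Rabs k2 ^ 2 * mu ^ 4))
      with ((q - p) * (Rabs (2 * be) * mu ^ 2 + 6 * Rabs k2 * D * mu ^ 3 + 12 * Rabs k2 ^ 2 * 1 * mu ^ 4)) in B3 by ring.
    assert (0 <= mu ^ 2) by (apply pow_le; lra).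
    nra.
Qed.

Lemma bigw_sum eps delta a b k2 k1 k0 m :
  0 < eps <= 1 -> 0 < delta <= 1 -> 0 <= a -> a <= b -> b <= 1 ->
  0 < m -> 4 * Rabs k2 <= m ->
  (forall u, a - eps <= u <= b + delta -> m <= Rabs (dd k2 k1 u)) ->
  Rabs (SumI (fun u => cos (th k2 k1 k0 u)) eps delta a b) <= (20 / eps + 20 / delta + 10) * (/ m) ^ 2.
Proof.
  intros He Hd Ha Hab Hb Hm Hk Hdd.
  destruct (bigw_piece k2 k1 k0 _ _ _ _ _ _ m (pok1 eps a He) Hm Hk
    ltac:(intros; apply Hdd; lra)) as [E1 [Q1 B1]].
  destruct (bigw_piece k2 k1 k0 _ _ _ _ _ _ m (pok2 eps a He) Hm Hk
    ltac:(intros; apply Hdd; lra)) as [E2 [Q2 B2]].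
  destruct (bigw_piece k2 k1 k0 _ _ _ _ _ _ m (pok3 a b Ha Hab Hb) Hm Hk
    ltac:(intros; apply Hdd; lra)) as [E3 [Q3 B3]].
  destruct (bigw_piece k2 k1 k0 _ _ _ _ _ _ m (pok4 delta b Hd) Hm Hk
    ltac:(intros; apply Hdd; lra)) as [E4 [Q4 B4]].
  destruct (bigw_piece k2 k1 k0 _ _ _ _ _ _ m (pok5 delta b Hd) Hm Hk
    ltac:(intros; apply Hdd; lra)) as [E5 [Q5 B5]].
  unfold SumI. rewrite Q1, Q2, Q3, Q4, Q5.
  assert (e0 : qpoly 0 (2 / eps ^ 2) (a - eps) (a - eps) = 0) by (unfold qpoly; ring).
  assert (e1 : qpoly 1 (- (2 / eps ^ 2)) a (a - eps / 2) = qpoly 0 (2 / eps ^ 2) (a - eps) (a - eps / 2))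
    by (unfold qpoly; field; lra).
  assert (e2 : qpoly 1 0 0 a = qpoly 1 (- (2 / eps ^ 2)) a a) by (unfold qpoly; ring).
  assert (e3 : qpoly 1 (- (2 / delta ^ 2)) b b = qpoly 1 0 0 b) by (unfold qpoly; ring).
  assert (e4 : qpoly 0 (2 / delta ^ 2) (b + delta) (b + delta / 2) = qpoly 1 (- (2 / delta ^ 2)) b (b + delta / 2))
    by (unfold qpoly; field; lra).
  assert (e5 : qpoly 0 (2 / delta ^ 2) (b + delta) (b + delta) = 0) by (unfold qpoly; ring).
  rewrite e0, e1, e2, e3, e4, e5.
  match goal with |- Rabs ?x <= _ => replace x with (E1 + E2 + E3 + E4 + E5) by ring end.
  assert (0 <= (/ m) ^ 2) by (apply pow_le; apply Rlt_le, Rinv_0_lt_compat; lra).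
  assert (Rabs (E1 + E2 + E3 + E4 + E5) <= Rabs E1 + Rabs E2 + Rabs E3 + Rabs E4 + Rabs E5).
  { repeat (eapply Rle_trans; [apply Rabs_triang|]; apply Rplus_le_compat_r). lra. }
  replace ((20 / eps + 20 / delta + 10) * (/ m) ^ 2) with
    ((5 * (2 / eps) + 2) * (/ m) ^ 2 + (5 * (2 / eps) + 2) * (/ m) ^ 2 + (5 * 0 + 2) * (/ m) ^ 2
     + (5 * (2 / delta) + 2) * (/ m) ^ 2 + (5 * (2 / delta) + 2) * (/ m) ^ 2) by (field; lra).
  lra.
Qed.

Lemma PI_gt3 : 3 < PI.
Proof. assert (H := PI2_3_2). lra. Qed.

Definition fr c v := cos (PI * v ^ 2 + c).

Lemma fr_cont c v : continuous (fr c) v.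
Proof.
  apply (ex_derive_continuous (K:=R_AbsRing) (V:=R_NormedModule)).
  unfold fr. auto_derive. auto.
Qed.

Lemma fr_ex c p q : ex_RInt (V:=R_CompleteNormedModule) (fr c) p q.
Proof. apply (ex_RInt_continuous (V:=R_CompleteNormedModule)). intros; apply fr_cont. Qed.

Lemma fr_tail c p q : p <= q -> (forall v, p <= v <= q -> 1 <= Rabs v) ->
  Rabs (RInt (fr c) p q) <= 1.
Proof.
  intros Hpq Hv.
  assert (Hnz : forall v, p <= v <= q -> v <> 0).
  { intros v H E. specialize (Hv v H). rewrite E, Rabs_R0 in Hv. lra. }
  assert (HPI := PI_gt3).
  set (h := fun v => sin (PI * v ^ 2 + c) / (2 * PI * v)).
  set (r := fun v => sin (PI * v ^ 2 + c) / (2 * PI * v ^ 2)).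
  set (g := fun v => / (2 * PI * v ^ 2)).
  set (k := fun v => - / (2 * PI * v)).
  assert (Ih : is_RInt (fun v => fr c v - r v) p q (h q - h p)).
  { apply (is_RInt_derive (V:=R_CompleteNormedModule) h).
    - intros x Hx. rewrite Rmin_left, Rmax_right in Hx by lra.
      assert (H0 := Hnz x Hx). unfold h, fr, r. auto_derive.
      + nz.
      + replace (PI * (x * (x * 1)) + c) with (PI * x ^ 2 + c) by ring. field. nz.
    - intros x Hx. rewrite Rmin_left, Rmax_right in Hx by lra.
      assert (H0 := Hnz x Hx).
      apply (ex_derive_continuous (K:=R_AbsRing) (V:=R_NormedModule)).
      unfold fr, r. auto_derive. nz. }
  assert (Ig : is_RInt g p q (k q - k p)).
  { apply (is_RInt_derive (V:=R_CompleteNormedModule) k).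
    - intros x Hx. rewrite Rmin_left, Rmax_right in Hx by lra.
      assert (H0 := Hnz x Hx). unfold k, g. auto_derive.
      + nz.
      + field. nz.
    - intros x Hx. rewrite Rmin_left, Rmax_right in Hx by lra.
      assert (H0 := Hnz x Hx).
      apply (ex_derive_continuous (K:=R_AbsRing) (V:=R_NormedModule)).
      unfold g. auto_derive. nz. }
  assert (Exr : ex_RInt (V:=R_CompleteNormedModule) r p q).
  { apply (ex_RInt_continuous (V:=R_CompleteNormedModule)). intros x Hx.
    rewrite Rmin_left, Rmax_right in Hx by lra. assert (H0 := Hnz x Hx).
    apply (ex_derive_continuous (K:=R_AbsRing) (V:=R_NormedModule)).
    unfold r. auto_derive. nz. }
  assert (Exg : ex_RInt (V:=R_CompleteNormedModule) g p q) by (eexists; exact Ig).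
  assert (Ir : is_RInt r p q (RInt r p q)) by (apply (RInt_correct (V:=R_CompleteNormedModule)); auto).
  assert (Ic := is_RInt_plus _ _ _ _ _ _ Ih Ir).
  assert (Ic' : is_RInt (fr c) p q (h q - h p + RInt r p q)).
  { eapply is_RInt_ext; [|exact Ic]. intros x _. simpl. unfold plus; simpl. ring. }
  rewrite (is_RInt_unique _ _ _ _ Ic').
  assert (Hgv : forall v, p < v < q -> - g v <= r v <= g v).
  { intros v Hv'. assert (H0 : v <> 0) by (apply Hnz; lra).
    assert (Hpos : 0 < / (2 * PI * v ^ 2)).
    { apply Rinv_0_lt_compat. assert (0 < v ^ 2) by (apply pow2_gt_0; auto). nra. }
    unfold r, g. unfold Rdiv. assert (S := SIN_bound (PI * v ^ 2 + c)). nra. }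
  assert (Exng : ex_RInt (V:=R_CompleteNormedModule) (fun v => - g v) p q).
  { eexists. apply (is_RInt_opp (V:=R_NormedModule) g). exact Ig. }
  assert (L1 := RInt_le r g p q Hpq Exr Exg (fun x H => proj2 (Hgv x H))).
  assert (L2 := RInt_le (fun v => - g v) r p q Hpq Exng Exr (fun x H => proj1 (Hgv x H))).
  rewrite (is_RInt_unique _ _ _ _ Ig) in L1.
  assert (Eng : RInt (fun v => - g v) p q = - (k q - k p)).
  { apply is_RInt_unique. apply (is_RInt_opp (V:=R_NormedModule) g). exact Ig. }
  rewrite Eng in L2.
  assert (Bk : forall v, p <= v <= q -> Rabs (k v) <= / (2 * PI)).
  { intros v Hv'. specialize (Hv v Hv'). assert (H0 := Hnz v Hv'). unfold k.
    rewrite Rabs_Ropp, Rabs_inv, Rabs_mult, (Rabs_right (2 * PI)) by lra.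
    apply Rinv_le_contravar; [lra|]. nra. }
  assert (Bh : forall v, p <= v <= q -> Rabs (h v) <= / (2 * PI)).
  { intros v Hv'. specialize (Hv v Hv'). assert (H0 := Hnz v Hv'). unfold h.
    unfold Rdiv. rewrite Rabs_mult, Rabs_inv, Rabs_mult, (Rabs_right (2 * PI)) by lra.
    assert (Sb := SIN_bound_abs (PI * v ^ 2 + c)).
    assert (0 < / (2 * PI * Rabs v)) by (apply Rinv_0_lt_compat; nra).
    apply Rle_trans with (1 * / (2 * PI * Rabs v)).
    apply Rmult_le_compat_r; [lra | exact Sb].
    rewrite Rmult_1_l. apply Rinv_le_contravar; [lra|]. nra. }
  assert (B1 := Bk p ltac:(lra)). assert (B2 := Bk q ltac:(lra)).
  assert (B3 := Bh p ltac:(lra)). assert (B4 := Bh q ltac:(lra)).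
  assert (/ (2 * PI) < 1/6).
  { apply Rmult_lt_reg_r with (2 * PI); [lra|]. rewrite Rinv_l by lra. lra. }
  apply Rabs_le_between in B1, B2, B3, B4.
  apply Rabs_le. lra.
Qed.

Lemma fr_small c p q : p <= q -> q - p <= 1 -> Rabs (RInt (fr c) p q) <= 1.
Proof.
  intros H1 H2. eapply Rle_trans.
  apply (abs_RInt_le_const (fr c) p q 1 H1 (fr_ex c p q)).
  intros; apply COS_bound_abs. nra.
Qed.

Lemma RInt_swap_abs f p q : ex_RInt (V:=R_CompleteNormedModule) f q p -> Rabs (RInt f p q) = Rabs (RInt f q p).
Proof.
  intros H. rewrite <- (opp_RInt_swap (V:=R_CompleteNormedModule) f q p H).
  unfold opp; simpl. apply Rabs_Ropp.
Qed.

Lemma fresnel c t : Rabs (RInt (fr c) 0 t) <= 2.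
Proof.
  destruct (Rle_dec t 1) as [Ht1|Ht1]; destruct (Rle_dec (-1) t) as [Ht2|Ht2].
  - destruct (Rle_dec 0 t).
    + assert (H := fr_small c 0 t ltac:(lra) ltac:(lra)). lra.
    + rewrite RInt_swap_abs by apply fr_ex.
      assert (H := fr_small c t 0 ltac:(lra) ltac:(lra)). lra.
  - rewrite <- (RInt_Chasles (V:=R_CompleteNormedModule) (fr c) 0 (-1) t (fr_ex _ _ _) (fr_ex _ _ _)).
    unfold plus; simpl.
    eapply Rle_trans; [apply Rabs_triang|].
    rewrite (RInt_swap_abs (fr c) 0 (-1) (fr_ex _ _ _)).
    rewrite (RInt_swap_abs (fr c) (-1) t (fr_ex _ _ _)).
    assert (H := fr_small c (-1) 0 ltac:(lra) ltac:(lra)).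
    assert (H' := fr_tail c t (-1) ltac:(lra) ltac:(intros v Hv; rewrite Rabs_left by lra; lra)).
    lra.
  - rewrite <- (RInt_Chasles (V:=R_CompleteNormedModule) (fr c) 0 1 t (fr_ex _ _ _) (fr_ex _ _ _)).
    unfold plus; simpl.
    eapply Rle_trans; [apply Rabs_triang|].
    assert (H := fr_small c 0 1 ltac:(lra) ltac:(lra)).
    assert (H' := fr_tail c 1 t ltac:(lra) ltac:(intros v Hv; rewrite Rabs_right by lra; lra)).
    lra.
  - lra.
Qed.

Lemma lin_fr c be x0 x : 0 < be -> Rabs (RInt (fun u => fr c (be * u + - be * x0)) x0 x) <= 2 / be.
Proof.
  intros Hb.
  assert (Ex : ex_RInt (V:=R_CompleteNormedModule) (fun u => fr c (be * u + - be * x0)) x0 x).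
  { apply (ex_RInt_continuous (V:=R_CompleteNormedModule)). intros z _.
    apply (ex_derive_continuous (K:=R_AbsRing) (V:=R_NormedModule)).
    unfold fr. auto_derive. auto. }
  assert (E := RInt_comp_lin (V:=R_CompleteNormedModule) (fr c) be (- be * x0) x0 x (fr_ex _ _ _)).
  rewrite (RInt_scal (V:=R_CompleteNormedModule) (fun u => fr c (be * u + - be * x0))) in E by exact Ex.
  replace (be * x0 + - be * x0) with 0 in E by ring.
  unfold scal in E; simpl in E; unfold mult in E; simpl in E.
  assert (F := fresnel c (be * x + - be * x0)). rewrite <- E in F.
  rewrite Rabs_mult, (Rabs_right be) in F by lra.
  apply Rmult_le_reg_l with be; [lra|]. unfold Rdiv.
  replace (be * (2 * / be)) with 2 by (field; lra). exact F.
Qed.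

Lemma fres_x0 al c x0 x : al <> 0 ->
  Rabs (RInt (fun u => cos (PI * al * (u - x0) ^ 2 + c)) x0 x) <= 2 / sqrt (Rabs al).
Proof.
  intros Ha.
  assert (Hpos : 0 < Rabs al) by (apply Rabs_pos_lt; auto).
  set (be := sqrt (Rabs al)).
  assert (Hbe : 0 < be) by (apply sqrt_lt_R0; auto).
  assert (Hbb : be * be = Rabs al) by (apply sqrt_sqrt; lra).
  destruct (Rle_lt_dec 0 al) as [Hal|Hal].
  - rewrite Rabs_right in Hbb by lra.
    rewrite (RInt_ext _ (fun u => fr c (be * u + - be * x0))).
    + apply lin_fr; auto.
    + intros u _. unfold fr. f_equal. replace al with (be * be) by auto. ring.
  - rewrite Rabs_left in Hbb by lra.
    rewrite (RInt_ext _ (fun u => fr (- c) (be * u + - be * x0))).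
    + apply lin_fr; auto.
    + intros u _. unfold fr. rewrite <- cos_neg. f_equal.
      replace al with (- (be * be)) by lra. ring.
Qed.

Lemma fres_gen al c x0 p x : al <> 0 ->
  Rabs (RInt (fun u => cos (PI * al * (u - x0) ^ 2 + c)) p x) <= 4 / sqrt (Rabs al).
Proof.
  intros Ha.
  set (f := fun u => cos (PI * al * (u - x0) ^ 2 + c)).
  assert (Exf : forall s t, ex_RInt (V:=R_CompleteNormedModule) f s t).
  { intros s t. apply (ex_RInt_continuous (V:=R_CompleteNormedModule)). intros z _.
    apply (ex_derive_continuous (K:=R_AbsRing) (V:=R_NormedModule)).
    unfold f. auto_derive. auto. }
  rewrite <- (RInt_Chasles (V:=R_CompleteNormedModule) f p x0 x (Exf _ _) (Exf _ _)).
  unfold plus; simpl.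
  eapply Rle_trans; [apply Rabs_triang|].
  rewrite (RInt_swap_abs f p x0 (Exf _ _)).
  assert (H1 := fres_x0 al c x0 p Ha). assert (H2 := fres_x0 al c x0 x Ha).
  fold f in H1, H2. unfold Rdiv in *. lra.
Qed.

Lemma qpoly_der al be z x : is_derive (qpoly al be z) x (2 * be * (x - z)).
Proof. unfold qpoly. auto_derive. auto. ring. Qed.

Lemma smallw_piece (f : R -> R) p q al be z D M :
  piece_ok p q al be z D -> (forall u, continuous f u) ->
  (forall x, Rabs (RInt f p x) <= M) ->
  Rabs (Ipiece f p q al be z) <= M * (1 + (q - p) * D).
Proof.
  intros [Hl [HD [Hg Hu]]] Hf HM.
  assert (HM0 : 0 <= M) by (eapply Rle_trans; [apply Rabs_pos| apply (HM p)]).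
  assert (Exf : forall s t, ex_RInt (V:=R_CompleteNormedModule) f s t).
  { intros s t. apply (ex_RInt_continuous (V:=R_CompleteNormedModule)). intros; auto. }
  set (Phi := fun x => RInt f p x).
  assert (DPhi : forall x, is_derive Phi x (f x)).
  { intros x. apply (is_derive_RInt (V:=R_NormedModule) f Phi p x).
    - apply filter_forall. intros y. unfold Phi. apply (RInt_correct (V:=R_CompleteNormedModule)). auto.
    - auto. }
  assert (CPhi : forall x, continuous Phi x).
  { intros x. apply (ex_derive_continuous (K:=R_AbsRing) (V:=R_NormedModule)). eexists; apply DPhi. }
  assert (I1 : is_RInt (fun t => f t * qpoly al be z t + Phi t * (2 * be * (t - z))) p q
                 (Phi q * qpoly al be z q - Phi p * qpoly al be z p)).
  { apply (is_RInt_derive (V:=R_CompleteNormedModule) (fun t => Phi t * qpoly al be z t)).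
    - intros x _.
      assert (H := is_derive_mult Phi (qpoly al be z) x _ _ (DPhi x) (qpoly_der al be z x) ltac:(intros; apply Rmult_comm)).
      simpl in H. unfold plus, mult in H; simpl in H. exact H.
    - intros x _. apply (continuous_plus (V:=R_NormedModule)).
      + apply mult_cont; auto. apply poly_cont.
      + apply mult_cont; auto.
        apply (ex_derive_continuous (K:=R_AbsRing) (V:=R_NormedModule)). auto_derive. auto. }
  set (R2 := RInt (fun t => Phi t * (2 * be * (t - z))) p q).
  assert (Ex2 : ex_RInt (V:=R_CompleteNormedModule) (fun t => Phi t * (2 * be * (t - z))) p q).
  { apply (ex_RInt_continuous (V:=R_CompleteNormedModule)). intros x _. apply mult_cont; auto.
    apply (ex_derive_continuous (K:=R_AbsRing) (V:=R_NormedModule)). auto_derive. auto. }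
  assert (I2 : is_RInt (fun t => Phi t * (2 * be * (t - z))) p q R2)
    by (apply (RInt_correct (V:=R_CompleteNormedModule)); auto).
  assert (I3 := is_RInt_minus _ _ _ _ _ _ I1 I2).
  assert (I4 : is_RInt (fun t => f t * qpoly al be z t) p q
                 (Phi q * qpoly al be z q - Phi p * qpoly al be z p - R2)).
  { eapply is_RInt_ext; [|exact I3]. intros x _. unfold minus, plus, opp; simpl. ring. }
  unfold Ipiece. rewrite (is_RInt_unique _ _ _ _ I4).
  assert (Php : Phi p = 0) by (unfold Phi; rewrite RInt_point; reflexivity).
  rewrite Php.
  assert (B1 : Rabs (Phi q * qpoly al be z q) <= M).
  { rewrite Rabs_mult. rewrite <- (Rmult_1_r M).
    apply Rmult_le_compat; try apply Rabs_pos. apply HM. apply Hu; lra. }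
  assert (B2 : Rabs R2 <= (q - p) * (M * D)).
  { apply abs_RInt_le_const; [lra|exact Ex2|]. intros t Ht.
    rewrite Rabs_mult. apply Rmult_le_compat; try apply Rabs_pos. apply HM. apply Hu; auto. }
  replace (Phi q * qpoly al be z q - 0 * qpoly al be z p - R2) with (Phi q * qpoly al be z q + - R2) by ring.
  eapply Rle_trans; [apply Rabs_triang|]. rewrite Rabs_Ropp.
  replace (M * (1 + (q - p) * D)) with (M + (q - p) * (M * D)) by ring. lra.
Qed.

Lemma smallw_sum (f : R -> R) eps delta a b M :
  0 < eps <= 1 -> 0 < delta <= 1 -> 0 <= a -> a <= b -> b <= 1 ->
  (forall u, continuous f u) -> (forall s x, Rabs (RInt f s x) <= M) ->
  Rabs (SumI f eps delta a b) <= 9 * M.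
Proof.
  intros He Hd Ha Hab Hb Hf HM.
  assert (B1 := smallw_piece f _ _ _ _ _ _ M (pok1 eps a He) Hf (HM _)).
  assert (B2 := smallw_piece f _ _ _ _ _ _ M (pok2 eps a He) Hf (HM _)).
  assert (B3 := smallw_piece f _ _ _ _ _ _ M (pok3 a b Ha Hab Hb) Hf (HM _)).
  assert (B4 := smallw_piece f _ _ _ _ _ _ M (pok4 delta b Hd) Hf (HM _)).
  assert (B5 := smallw_piece f _ _ _ _ _ _ M (pok5 delta b Hd) Hf (HM _)).
  replace (a - eps / 2 - (a - eps)) with (eps / 2) in B1 by field.
  replace (a - (a - eps / 2)) with (eps / 2) in B2 by field.
  replace (b + delta / 2 - b) with (delta / 2) in B4 by field.
  replace (b + delta - (b + delta / 2)) with (delta / 2) in B5 by field.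
  replace (eps / 2 * (2 / eps)) with 1 in B1, B2 by (field; lra).
  replace (delta / 2 * (2 / delta)) with 1 in B4, B5 by (field; lra).
  replace ((b - a) * 0) with 0 in B3 by ring.
  unfold SumI.
  match goal with |- Rabs (?A + ?B + ?C + ?D + ?E) <= _ =>
    assert (Rabs (A + B + C + D + E) <= Rabs A + Rabs B + Rabs C + Rabs D + Rabs E) by
    (repeat (eapply Rle_trans; [apply Rabs_triang|]; apply Rplus_le_compat_r); lra) end.
  lra.
Qed.

Lemma triv_piece (f : R -> R) p q al be z D : piece_ok p q al be z D -> (forall u, continuous f u) ->
  (forall u, Rabs (f u) <= 1) -> Rabs (Ipiece f p q al be z) <= q - p.
Proof.
  intros [Hl [HD [Hg Hu]]] Hf Hf1.
  unfold Ipiece. rewrite <- (Rmult_1_r (q - p)).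
  apply abs_RInt_le_const; [lra| |].
  - apply (ex_RInt_continuous (V:=R_CompleteNormedModule)). intros. apply mult_cont; auto. apply poly_cont.
  - intros t Ht. rewrite Rabs_mult, <- (Rmult_1_r 1). apply Rmult_le_compat; try apply Rabs_pos; auto.
    apply Hu; auto.
Qed.

Lemma triv_sum (f : R -> R) eps delta a b :
  0 < eps <= 1 -> 0 < delta <= 1 -> 0 <= a -> a <= b -> b <= 1 ->
  (forall u, continuous f u) -> (forall u, Rabs (f u) <= 1) ->
  Rabs (SumI f eps delta a b) <= 3.
Proof.
  intros He Hd Ha Hab Hb Hf HM.
  assert (B1 := triv_piece f _ _ _ _ _ _ (pok1 eps a He) Hf HM).
  assert (B2 := triv_piece f _ _ _ _ _ _ (pok2 eps a He) Hf HM).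
  assert (B3 := triv_piece f _ _ _ _ _ _ (pok3 a b Ha Hab Hb) Hf HM).
  assert (B4 := triv_piece f _ _ _ _ _ _ (pok4 delta b Hd) Hf HM).
  assert (B5 := triv_piece f _ _ _ _ _ _ (pok5 delta b Hd) Hf HM).
  unfold SumI.
  match goal with |- Rabs (?A + ?B + ?C + ?D + ?E) <= _ =>
    assert (Rabs (A + B + C + D + E) <= Rabs A + Rabs B + Rabs C + Rabs D + Rabs E) by
    (repeat (eapply Rle_trans; [apply Rabs_triang|]; apply Rplus_le_compat_r); lra) end.
  lra.
Qed.

Lemma Cmod_ee x : Cmod (ee x) = 1.
Proof.
  unfold Cmod, ee; simpl.
  assert (H := sin2_cos2 (2 * PI * x)). unfold Rsqr in H.
  replace (cos (2 * PI * x) * (cos (2 * PI * x) * 1) + sin (2 * PI * x) * (sin (2 * PI * x) * 1)) with 1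
    by lra. apply sqrt_1.
Qed.

Lemma Cmod_le_sum (x y : R) : Cmod (x, y) <= Rabs x + Rabs y.
Proof.
  unfold Cmod; simpl.
  rewrite <- (sqrt_Rsqr (Rabs x + Rabs y)) by (assert (H1 := Rabs_pos x); assert (H2 := Rabs_pos y); lra).
  apply sqrt_le_1_alt. unfold Rsqr.
  assert (H1 := Rabs_pos x); assert (H2 := Rabs_pos y).
  assert (E1 : x * (x * 1) = Rabs x * Rabs x) by (rewrite <- Rabs_mult; rewrite Rabs_right; [ring| nra]).
  assert (E2 : y * (y * 1) = Rabs y * Rabs y) by (rewrite <- Rabs_mult; rewrite Rabs_right; [ring| nra]).
  rewrite E1, E2. nra.
Qed.

Lemma sin_as_cos x : sin x = cos (x - PI / 2).
Proof. rewrite cos_minus, cos_PI2, sin_PI2. ring. Qed.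

Lemma int_part_IZR k : Int_part (IZR k) = k.
Proof.
  destruct (base_Int_part (IZR k)) as [H1 H2].
  apply le_IZR in H1.
  assert (IZR (Int_part (IZR k) - k) > -1) by (rewrite minus_IZR; lra).
  apply lt_IZR in H. lia.
Qed.

Lemma T_abs eps delta a b v : 0 < eps <= 1 -> 0 < delta <= 1 -> 0 <= a -> a <= b -> b <= 1 ->
  Rabs (Tfun eps delta a b v) * (1 + Rabs v) ^ 2 <= 9.
Proof.
  intros He Hd Ha Hab Hb.
  destruct (Rle_dec v (a - eps)).
  { rewrite T0l by auto. rewrite Rabs_R0. lra. }
  destruct (Rle_dec (b + delta) v).
  { rewrite T0r by auto. rewrite Rabs_R0. lra. }
  assert (Hv : Rabs v <= 2) by (apply Rabs_le; lra).
  assert (HT : Rabs (Tfun eps delta a b v) <= 1).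
  { destruct (Rle_dec v (a - eps / 2)).
    { rewrite T1 by lra. apply (pok1 eps a He). lra. }
    destruct (Rle_dec v a).
    { rewrite T2 by lra. apply (pok2 eps a He). lra. }
    destruct (Rle_dec v b).
    { rewrite T3 by (auto; lra). apply (pok3 a b Ha Hab Hb). lra. }
    destruct (Rle_dec v (b + delta / 2)).
    { rewrite T4 by (auto; lra). apply (pok4 delta b Hd). lra. }
    rewrite T5 by (auto; lra). apply (pok5 delta b Hd). lra. }
  assert (0 <= Rabs (Tfun eps delta a b v)) by apply Rabs_pos.
  assert (0 <= Rabs v) by apply Rabs_pos.
  assert ((1 + Rabs v) ^ 2 <= 9) by nra.
  assert (0 <= (1 + Rabs v) ^ 2) by nra.
  nra.
Qed.

Lemma th_cont k2 k1 k0 u : continuous (fun u => cos (th k2 k1 k0 u)) u.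
Proof.
  apply (ex_derive_continuous (K:=R_AbsRing) (V:=R_NormedModule)). unfold th. auto_derive. auto.
Qed.

Definition K2 phi := PI * cos phi / sin phi.
Definition K1 phi w := - (2 * PI * w / sin phi).
Definition K0 phi w := PI * w ^ 2 * cos phi / sin phi.

Lemma CInt_eq eps delta a b w phi : 0 < eps <= 1 -> 0 < delta <= 1 -> 0 <= a -> a <= b -> b <= 1 ->
  sin phi <> 0 ->
  CInt_R (fun w' => Cmult (ee (((1/2) * (w ^ 2 + w' ^ 2) * cos phi - w * w') / sin phi))
                          (RtoC (Tfun eps delta a b w'))) =
  (SumI (fun u => cos (th (K2 phi) (K1 phi w) (K0 phi w) u)) eps delta a b,
   SumI (fun u => cos (th (K2 phi) (K1 phi w) (K0 phi w - PI / 2) u)) eps delta a b).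
Proof.
  intros He Hd Ha Hab Hb Hs.
  assert (Eth : forall u, 2 * PI * (((1/2) * (w ^ 2 + u ^ 2) * cos phi - w * u) / sin phi) =
                          th (K2 phi) (K1 phi w) (K0 phi w) u).
  { intros u. unfold th, K2, K1, K0. field. auto. }
  unfold CInt_R. f_equal.
  - erewrite (functional_extensionality _ (fun u => cos (th (K2 phi) (K1 phi w) (K0 phi w) u) * Tfun eps delta a b u)).
    + apply is_RInt_gen_unique. apply decomp; auto. intros; apply th_cont.
    + intros u. unfold ee, Cmult, RtoC; cbn [fst snd]. rewrite Eth. ring.
  - erewrite (functional_extensionality _ (fun u => cos (th (K2 phi) (K1 phi w) (K0 phi w - PI / 2) u) * Tfun eps delta a b u)).
    + apply is_RInt_gen_unique. apply decomp; auto. intros; apply th_cont.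
    + intros u. unfold ee, Cmult, RtoC; cbn [fst snd]. rewrite Eth.
      replace (th (K2 phi) (K1 phi w) (K0 phi w - PI / 2) u) with (th (K2 phi) (K1 phi w) (K0 phi w) u - PI / 2)
        by (unfold th; ring).
      rewrite <- sin_as_cos. ring.
Qed.

Section Main.
Variables eps delta a b phi w : R.
Hypothesis He : 0 < eps <= 1.
Hypothesis Hd : 0 < delta <= 1.
Hypothesis Ha : 0 <= a.
Hypothesis Hab : a <= b.
Hypothesis Hb : b <= 1.
Hypothesis Hs : sin phi <> 0.

Let s := sin phi.
Let c := cos phi.
Let Sc k0 := SumI (fun u => cos (th (K2 phi) (K1 phi w) k0 u)) eps delta a b.

Lemma sc1 : s ^ 2 + c ^ 2 = 1.
Proof. unfold s, c. assert (H := sin2_cos2 phi). unfold Rsqr in H. lra. Qed.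

Lemma ie_ge1 : 1 <= / eps /\ 1 <= / delta.
Proof.
  split.
  - rewrite <- Rinv_1. apply Rinv_le_contravar; lra.
  - rewrite <- Rinv_1. apply Rinv_le_contravar; lra.
Qed.

Lemma caseA k0 : 4 <= Rabs w ->
  Rabs (Sc k0) <= (20 / eps + 20 / delta + 10) * (s ^ 2 / (PI ^ 2 * w ^ 2)).
Proof.
  intros Hw.
  assert (HPI := PI_gt3).
  assert (Has : 0 < Rabs s) by (apply Rabs_pos_lt; auto).
  set (is := / Rabs s).
  assert (His : 0 < is) by (apply Rinv_0_lt_compat; auto).
  set (m := PI * Rabs w * is).
  assert (Hm : 0 < m) by (unfold m; apply Rmult_lt_0_compat; [apply Rmult_lt_0_compat|]; lra).
  assert (Hc : Rabs c <= 1) by (unfold c; apply COS_bound_abs).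
  assert (HK2 : Rabs (K2 phi) = PI * Rabs c * is).
  { unfold K2, is, Rdiv. rewrite !Rabs_mult, Rabs_inv, (Rabs_right PI) by lra. fold c s. ring. }
  assert (Hk : 4 * Rabs (K2 phi) <= m).
  { rewrite HK2. unfold m.
    assert (PI * Rabs c * is <= PI * is).
    { rewrite <- (Rmult_1_r PI) at 2. apply Rmult_le_compat_r; [lra|]. apply Rmult_le_compat_l; lra. }
    assert (0 <= PI * is * (Rabs w - 4)) by (apply Rmult_le_pos; [apply Rmult_le_pos|]; lra). lra. }
  assert (Hdd : forall u, a - eps <= u <= b + delta -> m <= Rabs (dd (K2 phi) (K1 phi w) u)).
  { intros u Hu.
    replace (dd (K2 phi) (K1 phi w) u) with (2 * PI * (c * u - w) * / s)
      by (unfold dd, K2, K1, c, s; field; auto).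
    rewrite !Rabs_mult, Rabs_inv, (Rabs_right 2), (Rabs_right PI) by lra. fold is.
    assert (Hcu : Rabs (c * u) <= 2).
    { rewrite Rabs_mult. assert (Rabs u <= 2) by (apply Rabs_le; lra).
      assert (0 <= Rabs u) by apply Rabs_pos. nra. }
    assert (Rabs w / 2 <= Rabs (c * u - w)).
    { assert (H := Rabs_triang_inv w (c * u)).
      replace (c * u - w) with (- (w - c * u)) by ring. rewrite Rabs_Ropp. lra. }
    unfold m. assert (0 <= PI * is * (2 * Rabs (c * u - w) - Rabs w)) by (apply Rmult_le_pos; [apply Rmult_le_pos|]; lra). lra. }
  eapply Rle_trans. apply (bigw_sum eps delta a b (K2 phi) (K1 phi w) k0 m He Hd Ha Hab Hb Hm Hk Hdd).
  apply Req_le. f_equal. unfold m, is.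
  assert (w <> 0) by (intro E; rewrite E, Rabs_R0 in Hw; lra).
  rewrite <- (pow2_abs w), <- (pow2_abs s).
  assert (Rabs w <> 0) by (apply Rabs_no_R0; auto).
  field. repeat split; lra.
Qed.

Lemma caseC k0 : c <> 0 -> Rabs (Sc k0) <= 9 * (4 / sqrt (Rabs (c / s))).
Proof.
  intros Hc.
  assert (Hal : c / s <> 0) by (unfold Rdiv; apply Rmult_integral_contrapositive_currified; auto; apply Rinv_neq_0_compat; auto).
  unfold Sc. apply (smallw_sum (fun u => cos (th (K2 phi) (K1 phi w) k0 u)) eps delta a b (4 / sqrt (Rabs (c / s))) He Hd Ha Hab Hb).
  - intros; apply th_cont.
  - intros p x.
    rewrite (RInt_ext _ (fun u => cos (PI * (c / s) * (u - w / c) ^ 2 + (k0 - PI * w ^ 2 / (s * c))))).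
    + apply fres_gen; exact Hal.
    + intros u _. f_equal. unfold th, K2, K1. unfold c, s in *. field. split; assumption.
Qed.
End Main.

Lemma arithA s w X Sc Ss : s <> 0 -> Rabs s <= 1 -> 4 <= Rabs w -> 0 <= X ->
  Rabs Sc <= X * (s ^ 2 / (PI ^ 2 * w ^ 2)) -> Rabs Ss <= X * (s ^ 2 / (PI ^ 2 * w ^ 2)) ->
  / sqrt (Rabs s) * (Rabs Sc + Rabs Ss) * (1 + Rabs w) ^ 2 <= X.
Proof.
  intros Hs Hs1 Hw HX H1 H2.
  assert (HPI := PI_gt3).
  assert (Has : 0 < Rabs s) by (apply Rabs_pos_lt; auto).
  set (r := sqrt (Rabs s)).
  assert (Hr : 0 < r) by (apply sqrt_lt_R0; auto).
  assert (Hrr : r * r = Rabs s) by (apply sqrt_sqrt; lra).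
  assert (Hr1 : r <= 1) by nra.
  assert (Hw0 : w <> 0) by (intro E; rewrite E, Rabs_R0 in Hw; lra).
  assert (Haw : 0 < Rabs w) by lra.
  assert (Es : s ^ 2 = r ^ 4) by (rewrite <- pow2_abs; rewrite <- Hrr; ring).
  assert (Ew : w ^ 2 = Rabs w ^ 2) by (rewrite pow2_abs; auto).
  set (Y := s ^ 2 / (PI ^ 2 * w ^ 2)).
  assert (EY : / r * Y * (1 + Rabs w) ^ 2 = r ^ 3 * ((1 + Rabs w) ^ 2 / (PI ^ 2 * Rabs w ^ 2))).
  { unfold Y. rewrite Es, Ew. field. repeat split; lra. }
  assert (B1 : (1 + Rabs w) ^ 2 / (PI ^ 2 * Rabs w ^ 2) <= 1 / 2).
  { apply Rmult_le_reg_r with (PI ^ 2 * Rabs w ^ 2). apply Rmult_lt_0_compat; apply pow_lt; lra.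
    unfold Rdiv. rewrite Rmult_assoc, Rinv_l by (apply Rgt_not_eq, Rmult_lt_0_compat; apply pow_lt; lra).
    assert (9 <= PI ^ 2) by nra. assert (0 <= Rabs w ^ 2) by nra.
    assert (9 * Rabs w ^ 2 <= PI ^ 2 * Rabs w ^ 2) by nra. nra. }
  assert (B2 : r ^ 3 <= 1).
  { assert (0 <= r ^ 3) by (apply pow_le; lra). nra. }
  assert (B3 : / r * Y * (1 + Rabs w) ^ 2 <= 1 / 2).
  { rewrite EY. assert (0 <= (1 + Rabs w) ^ 2 / (PI ^ 2 * Rabs w ^ 2)).
    { apply Rmult_le_pos; [nra| apply Rlt_le, Rinv_0_lt_compat; apply Rmult_lt_0_compat; apply pow_lt; lra]. }
    assert (0 <= r ^ 3) by (apply pow_le; lra). nra. }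
  assert (0 < / r) by (apply Rinv_0_lt_compat; lra).
  assert (0 <= (1 + Rabs w) ^ 2) by nra.
  assert (Rabs Sc + Rabs Ss <= 2 * X * Y) by (fold Y in H1, H2; lra).
  apply Rle_trans with (/ r * (2 * X * Y) * (1 + Rabs w) ^ 2).
  - apply Rmult_le_compat_r; [lra|]. apply Rmult_le_compat_l; lra.
  - replace (/ r * (2 * X * Y) * (1 + Rabs w) ^ 2) with (2 * X * (/ r * Y * (1 + Rabs w) ^ 2)) by ring.
    nra.
Qed.

Lemma arithB s w Sc Ss : 1 / 4 <= Rabs s -> Rabs w < 4 -> Rabs Sc <= 3 -> Rabs Ss <= 3 ->
  / sqrt (Rabs s) * (Rabs Sc + Rabs Ss) * (1 + Rabs w) ^ 2 <= 300.
Proof.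
  intros Hs Hw H1 H2.
  set (r := sqrt (Rabs s)).
  assert (Hr : 0 < r) by (apply sqrt_lt_R0; lra).
  assert (Hrr : r * r = Rabs s) by (apply sqrt_sqrt; lra).
  assert (Hr2 : 1 / 2 <= r) by nra.
  assert (Hir : / r <= 2).
  { replace 2 with (/ (1/2)) by field. apply Rinv_le_contravar; lra. }
  assert (0 < / r) by (apply Rinv_0_lt_compat; lra).
  assert (0 <= Rabs w) by apply Rabs_pos.
  assert (0 <= Rabs Sc) by apply Rabs_pos. assert (0 <= Rabs Ss) by apply Rabs_pos.
  assert ((1 + Rabs w) ^ 2 <= 25) by nra.
  assert (0 <= (1 + Rabs w) ^ 2) by nra.
  assert (/ r * (Rabs Sc + Rabs Ss) <= 12) by nra.
  assert (0 <= / r * (Rabs Sc + Rabs Ss)) by nra.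
  nra.
Qed.

Lemma arithC s c w Sc Ss : s <> 0 -> 1 / 4 <= Rabs c -> Rabs w < 4 ->
  Rabs Sc <= 9 * (4 / sqrt (Rabs (c / s))) -> Rabs Ss <= 9 * (4 / sqrt (Rabs (c / s))) ->
  / sqrt (Rabs s) * (Rabs Sc + Rabs Ss) * (1 + Rabs w) ^ 2 <= 3600.
Proof.
  intros Hs Hc Hw H1 H2.
  assert (Has : 0 < Rabs s) by (apply Rabs_pos_lt; auto).
  assert (Hcs : Rabs (c / s) = Rabs c / Rabs s) by (unfold Rdiv; rewrite Rabs_mult, Rabs_inv; ring).
  assert (Hcs0 : 0 < Rabs (c / s)) by (rewrite Hcs; apply Rdiv_lt_0_compat; lra).
  assert (Hprod : sqrt (Rabs s) * sqrt (Rabs (c / s)) = sqrt (Rabs c)).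
  { rewrite <- sqrt_mult_alt by lra. f_equal. rewrite Hcs. field. lra. }
  assert (Hsc : 1 / 2 <= sqrt (Rabs c)).
  { replace (1/2) with (sqrt (1/4)). apply sqrt_le_1_alt; lra.
    rewrite <- (sqrt_Rsqr (1/2)) by lra. unfold Rsqr. f_equal. field. }
  set (r := sqrt (Rabs s)) in *. set (q := sqrt (Rabs (c / s))) in *.
  assert (Hr : 0 < r) by (apply sqrt_lt_R0; lra).
  assert (Hq : 0 < q) by (apply sqrt_lt_R0; lra).
  assert (Hrq : / r * / q <= 2).
  { rewrite <- Rinv_mult. rewrite Hprod. replace 2 with (/ (1/2)) by field. apply Rinv_le_contravar; lra. }
  assert (0 <= Rabs w) by apply Rabs_pos.
  assert ((1 + Rabs w) ^ 2 <= 25) by nra.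
  assert (0 <= (1 + Rabs w) ^ 2) by nra.
  assert (0 < / r) by (apply Rinv_0_lt_compat; lra).
  assert (Rabs Sc + Rabs Ss <= 72 * / q) by (unfold Rdiv in H1, H2; lra).
  assert (0 <= Rabs Sc + Rabs Ss) by (assert (G3 := Rabs_pos Sc); assert (G4 := Rabs_pos Ss); lra).
  assert (/ r * (Rabs Sc + Rabs Ss) <= 144).
  { apply Rle_trans with (/ r * (72 * / q)). apply Rmult_le_compat_l; lra.
    replace (/ r * (72 * / q)) with (72 * (/ r * / q)) by ring. lra. }
  assert (0 <= / r * (Rabs Sc + Rabs Ss)) by nra.
  nra.
Qed.

Theorem lemma3p1 :
  exists Cst : R,
    forall eps delta a b : R,
      0 < eps <= 1 -> 0 < delta <= 1 -> 0 <= a -> a <= b -> b <= 1 ->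
      forall phi w : R,
        Cmod (frft (Tfun eps delta a b) phi w) * (1 + Rabs w) ^ 2
          <= Cst * (/ eps + / delta).
Proof.
  exists 2000. intros eps delta a b He Hd Ha Hab Hb phi w.
  destruct (ie_ge1 eps delta He Hd) as [Ie Id].
  assert (Hgoal : 3600 <= 2000 * (/ eps + / delta)) by lra.
  unfold frft.
  destruct (Req_EM_T (phi / PI) (IZR (Int_part (phi / PI)))) as [Eq|Neq].
  - destruct (Z.even (Int_part (phi / PI))).
    + rewrite Cmod_R. assert (H := T_abs eps delta a b w He Hd Ha Hab Hb). lra.
    + rewrite Cmod_mult, Cmod_ee, Cmod_R, Rmult_1_l.
      assert (H := T_abs eps delta a b (- w) He Hd Ha Hab Hb). rewrite Rabs_Ropp in H. lra.
  - assert (Hs : sin phi <> 0).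
    { intros E. apply sin_eq_0_0 in E. destruct E as [k Hk]. apply Neq.
      assert (HPI := PI_RGT_0).
      replace (phi / PI) with (IZR k) by (rewrite Hk; field; lra).
      rewrite int_part_IZR. reflexivity. }
    rewrite (CInt_eq eps delta a b w phi He Hd Ha Hab Hb Hs).
    rewrite !Cmod_mult, Cmod_ee, Cmod_R, Rmult_1_l.
    assert (Has : 0 < Rabs (sin phi)) by (apply Rabs_pos_lt; auto).
    assert (Hsq : 0 < sqrt (Rabs (sin phi))) by (apply sqrt_lt_R0; auto).
    rewrite Rabs_right by (apply Rle_ge, Rlt_le, Rinv_0_lt_compat; auto).
    set (Sc := SumI (fun u => cos (th (K2 phi) (K1 phi w) (K0 phi w) u)) eps delta a b).
    set (Ss := SumI (fun u => cos (th (K2 phi) (K1 phi w) (K0 phi w - PI / 2) u)) eps delta a b).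
    assert (HC := Cmod_le_sum Sc Ss).
    assert (Hw2 : 0 <= (1 + Rabs w) ^ 2) by (assert (H := Rabs_pos w); nra).
    assert (Hi : 0 < / sqrt (Rabs (sin phi))) by (apply Rinv_0_lt_compat; auto).
    apply Rle_trans with (/ sqrt (Rabs (sin phi)) * (Rabs Sc + Rabs Ss) * (1 + Rabs w) ^ 2).
    { apply Rmult_le_compat_r; auto. apply Rmult_le_compat_l; lra. }
    assert (Hsc := sc1 phi).
    assert (Hs1 : Rabs (sin phi) <= 1) by apply SIN_bound_abs.
    destruct (Rle_dec 4 (Rabs w)) as [Hw|Hw].
    + assert (H1 := caseA eps delta a b phi w He Hd Ha Hab Hb Hs (K0 phi w) Hw).
      assert (H2 := caseA eps delta a b phi w He Hd Ha Hab Hb Hs (K0 phi w - PI / 2) Hw).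
      simpl in H1, H2.
      assert (HX : 0 <= 20 / eps + 20 / delta + 10) by (unfold Rdiv; lra).
      assert (H := arithA (sin phi) w _ Sc Ss Hs Hs1 Hw HX H1 H2).
      unfold Rdiv in H. lra.
    + destruct (Rle_dec (Rabs (cos phi)) (1 / 2)) as [Hc|Hc].
      * assert (Hf1 : forall k0 u, Rabs (cos (th (K2 phi) (K1 phi w) k0 u)) <= 1) by (intros; apply COS_bound_abs).
        assert (H1 := triv_sum _ eps delta a b He Hd Ha Hab Hb (th_cont _ _ _) (Hf1 (K0 phi w))).
        assert (H2 := triv_sum _ eps delta a b He Hd Ha Hab Hb (th_cont _ _ _) (Hf1 (K0 phi w - PI / 2))).
        assert (Hs4 : 1 / 4 <= Rabs (sin phi)).
        { assert (cos phi ^ 2 <= 1 / 4).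
          { rewrite <- pow2_abs. assert (0 <= Rabs (cos phi)) by apply Rabs_pos. nra. }
          rewrite <- pow2_abs in Hsc. assert (0 <= Rabs (sin phi)) by apply Rabs_pos. nra. }
        assert (H := arithB (sin phi) w Sc Ss Hs4 ltac:(lra) H1 H2). lra.
      * assert (Hc0 : cos phi <> 0) by (intro E; rewrite E, Rabs_R0 in Hc; lra).
        assert (H1 := caseC eps delta a b phi w He Hd Ha Hab Hb Hs (K0 phi w) Hc0).
        assert (H2 := caseC eps delta a b phi w He Hd Ha Hab Hb Hs (K0 phi w - PI / 2) Hc0).
        simpl in H1, H2.
        assert (H := arithC (sin phi) (cos phi) w Sc Ss Hs ltac:(lra) ltac:(lra) H1 H2). lra.
Qed.
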